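(* Let $M\cong\prec a_1,\ldots,a_m\succ$ and $N\cong\prec b_1,\ldots,b_n\succ$ be integral lattices relative to good BONGs with $m\ge n$, and let $j\in[1,\min\{m-1,n\}]^E$. If $R_j=-2e$ and $R_{j+1}=0$, then $d[a_{1,j}b_{1,j}]\ge A_j$.
   Context: $F$ dyadic local field, $\mathcal O_F$, valuation $\operatorname{ord}$, $e=\operatorname{ord}(2)$, $d(c)=\operatorname{ord}(c^{-1}\mathfrak d(c))$ with quadratic defect $\mathfrak d(c)=\bigcap_{x\in F}(c-x^2)\mathcal O_F$. Integral: $Q(M)\subseteq\mathcal O_F$. BONGs: $x_1,\ldots,x_m\in FM$ is a BONG of $M$ if $x_1\in M$ with $Q(x_1)\mathcal O_F=\mathfrak nM$ and $x_2,\ldots,x_m$ is a BONG of the projection of $M$ onto $(Fx_1)^\perp$; good if $\operatorname{ord}Q(x_i)\le\operatorname{ord}Q(x_{i+2})$; $M\cong\prec a_1,\ldots,a_m\succ$ means $Q(x_i)=a_i$. $R_i=\operatorname{ord}(a_i)$, $S_i=\operatorname{ord}(b_i)$. $a_{i,j}=a_i\cdots a_j$, $a_{i,i-1}=1$, similarly $b_{i,j}$. $[h,k]^E$ is the set of even integers in $[h,k]$. For $1\le i\le m-1$, $\alpha_i=\min\{T_0,\ldots,T_{m-1}\}$ with $T_0=(R_{i+1}-R_i)/2+e$, $T_j=R_{i+1}-R_j+d(-a_ja_{j+1})$ ($1\le j\le i$), $T_j=R_{j+1}-R_i+d(-a_ja_{j+1})$ ($i\le j\le m-1$); $\beta_i$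 is defined likewise from $N$. For $c\in F^\times$, $0\le i\le m$, $0\le j\le n$: $d[ca_{1,i}b_{1,j}]=\min\{d(ca_{1,i}b_{1,j}),\alpha_i,\beta_j\}$, where $\alpha_i$ is omitted if $i\in\{0,m\}$ and $\beta_j$ omitted if $j\in\{0,n\}$. For $1\le i\le\min\{m-1,n\}$, $A_i=\min\{(R_{i+1}-S_i)/2+e,\ R_{i+1}-S_i+d[-a_{1,i+1}b_{1,i-1}],\ R_{i+1}+R_{i+2}-S_{i-1}-S_i+d[a_{1,i+2}b_{1,i-2}]\}$, the third term omitted if $i=1$ or $i=m-1$. *)

(* Defs.v *)
From HB Require Import structures.
From mathcomp Require Import all_boot all_order all_algebra.
From Stdlib Require Import ClassicalEpsilon.
Set Implicit Arguments.
Unset Strict Implicit.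
Unset Printing Implicit Defensive.
Import Order.TTheory GRing.Theory Num.Theory.
Local Open Scope ring_scope.

(* Extended rationals Q ∪ {+oo} (values of d, alpha, A, ... ; T_0 may be a
   half-integer, d(c) may be +oo). *)
Inductive xr := XFin of rat | XInf.

Definition xle (x y : xr) : bool :=
  match x, y with
  | _, XInf => true
  | XInf, XFin _ => false
  | XFin p, XFin q => p <= q
  end.
Definition xmin (x y : xr) : xr := if xle x y then x else y.
Definition xadd (q : rat) (x : xr) : xr :=
  match x with XFin p => XFin (q + p) | XInf => XInf end.
Definition xsup (S : xr -> Prop) : xr :=
  epsilon (inhabits XInf)
    (fun u => (forall x, S x -> xle x u) /\
              (forall v, (forall x, S x -> xle x v) -> xle u v)).

Record dyadic_local_field (F : fieldType) := DyadicLocalField {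
  ord : F -> int;
  ord_mul : forall x y : F, x != 0 -> y != 0 -> ord (x * y) = ord x + ord y;
  ord_add : forall x y : F, x != 0 -> y != 0 -> x + y != 0 ->
      Num.min (ord x) (ord y) <= ord (x + y);
  ord_surj : forall k : int, exists x : F, x != 0 /\ ord x = k;
  ord_complete : forall u : nat -> F,
      (forall k : int, exists N, forall p q, (N <= p)%N -> (N <= q)%N ->
          u p = u q \/ k <= ord (u p - u q)) ->
      exists l : F, forall k : int, exists N, forall p, (N <= p)%N ->
          u p = l \/ k <= ord (u p - l);
  residue_finite : exists s : seq F, forall x : F, (x == 0) || (0 <= ord x) ->
      exists2 y, y \in s & (x - y == 0) || (0 < ord (x - y));
  two_neq0 : (2%:R : F) != 0;
  ord_two_gt0 : 0 < ord 2%:R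
}.

Section Dyadic.
Variables (F : fieldType) (K : dyadic_local_field F).
Local Notation ord := (ord K).

Definition ordr (x : F) : rat := (ord x)%:~R.
Definition eF : rat := ordr 2%:R.
Definition intg (x : F) : bool := (x == 0) || (0 <= ord x).
Definition ordx (x : F) : xr := if x == 0 then XInf else XFin (ordr x).
(* d(c) = ord(c^{-1} d(c)) where the quadratic defect d(c) is the ideal
   \bigcap_x (c - x^2) O_F, whose order is sup_x ord(c - x^2). *)
Definition qdef (c : F) : xr :=
  xadd (- ordr c) (xsup (fun u => exists x : F, u = ordx (c - x ^+ 2))).

(* Quadratic spaces F^k with symmetric Gram matrix G: B(u,v) = u G v^T,
   Q(v) = B(v,v). *)
Section Lattices.
Variables (k : nat) (G : 'M[F]_k).

Definition Bf (u v : 'rV[F]_k) : F := (u *m G *m v^T) 0 0.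
Definition Qf (v : 'rV[F]_k) : F := Bf v v.

Definition in_lat (s : seq 'rV[F]_k) (v : 'rV[F]_k) : Prop :=
  exists c : 'I_(size s) -> F,
    (forall i, intg (c i)) /\ v = \sum_(i < size s) c i *: s`_i.

Definition proj (x v : 'rV[F]_k) : 'rV[F]_k := v - (Bf v x / Qf x) *: x.

(* xs is a BONG of the lattice generated by s:
   x_1 in M with Q(x_1) O_F = nM, and x_2.. a BONG of the projection of M *)
Fixpoint is_BONG (s : seq 'rV[F]_k) (xs : seq 'rV[F]_k) : Prop :=
  match xs with
  | [::] => forall v, in_lat s v -> v = 0
  | x :: xs' =>
      [/\ in_lat s x, Qf x != 0,
          (forall v, in_lat s v -> intg (Qf v / Qf x))
        & is_BONG (map (proj x) s) xs']
  end.

End Lattices.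

(* a_i, 1-based *)
Definition ai (a : seq F) (i : nat) : F := nth 0 a i.-1.
Definition Rr (a : seq F) (i : nat) : rat := ordr (ai a i).
(* a_{i,j} = a_i ... a_j  (= 1 if j = i - 1) *)
Definition prodr (a : seq F) (i j : nat) : F := \prod_(i <= l < j.+1) ai a l.

Definition good_seq (a : seq F) : Prop :=
  forall i, (1 <= i)%N -> (i + 2 <= size a)%N -> ord (ai a i) <= ord (ai a i.+2).

(* M = lattice generated by s in (F^k, G), M ≅ ≺a_1..a_m≻ relative to a good BONG *)
Definition good_BONG_lattice (k : nat) (G : 'M[F]_k) (s : seq 'rV[F]_k)
    (a : seq F) : Prop :=
  exists xs, is_BONG G s xs /\ map (Qf G) xs = a /\ good_seq a.

Definition integral_lattice (k : nat) (G : 'M[F]_k) (s : seq 'rV[F]_k) : Prop :=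
  forall v, in_lat s v -> intg (Qf G v).

Definition Tterm (a : seq F) (i jj : nat) : xr :=
  if jj == 0%N then XFin ((Rr a i.+1 - Rr a i) / 2%:R + eF)
  else if (jj <= i)%N then
    xadd (Rr a i.+1 - Rr a jj) (qdef (- (ai a jj * ai a jj.+1)))
  else xadd (Rr a jj.+1 - Rr a i) (qdef (- (ai a jj * ai a jj.+1))).

Definition alpha (a : seq F) (i : nat) : xr :=
  foldr xmin XInf [seq Tterm a i jj | jj <- iota 0 (size a)].

Definition dbr (a b : seq F) (c : F) (i j : nat) : xr :=
  xmin (qdef (c * prodr a 1 i * prodr b 1 j))
    (xmin (if (0 < i < size a)%N then alpha a i else XInf)
          (if (0 < j < size b)%N then alpha b j else XInf)).

Definition Acoef (a b : seq F) (i : nat) : xr :=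
  xmin (XFin ((Rr a i.+1 - Rr b i) / 2%:R + eF))
   (xmin (xadd (Rr a i.+1 - Rr b i) (dbr a b (-1) i.+1 i.-1))
     (if (i == 1%N) || (i == (size a).-1) then XInf
      else xadd (Rr a i.+1 + Rr a i.+2 - Rr b i.-1 - Rr b i)
                (dbr a b 1 i.+2 i.-2))).

End Dyadic.

(* Main.v *)
Require Import Defs.
From mathcomp Require Import all_boot all_order all_algebra.
From mathcomp Require Import ring lra zify.
From Stdlib Require Import ClassicalEpsilon.
Import Order.TTheory GRing.Theory Num.Theory.
Local Open Scope ring_scope.
Set Implicit Arguments.
Unset Strict Implicit.
Unset Printing Implicit Defensive.

Lemma xle_refl x : xle x x.
Proof. by case: x => //= p. Qed.

Lemma xle_trans x y z : xle x y -> xle y z -> xle x z.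
Proof. case: x; case: y; case: z => //= p q r; exact: le_trans. Qed.

Lemma xle_inf x : xle x XInf.
Proof. by case: x. Qed.

Lemma xle_total x y : xle x y || xle y x.
Proof. case: x; case: y => //= p q; exact: le_total. Qed.

Lemma xle_minl x y z : xle x z -> xle (xmin x y) z.
Proof.
rewrite /xmin; case: ifP => // hxy hxz.
have := xle_total x y; rewrite hxy /= => hyx; exact: xle_trans hyx hxz.
Qed.

Lemma xle_minr x y z : xle y z -> xle (xmin x y) z.
Proof. rewrite /xmin; case: ifP => // hxy hyz; exact: xle_trans hxy hyz. Qed.

Lemma xle_min z x y : xle z x -> xle z y -> xle z (xmin x y).
Proof. by rewrite /xmin; case: ifP. Qed.

Lemma xmin_l x y : xle (xmin x y) x.
Proof. apply: xle_minl; exact: xle_refl. Qed.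
Lemma xmin_r x y : xle (xmin x y) y.
Proof. apply: xle_minr; exact: xle_refl. Qed.

Lemma xadd_le q r x y : q <= r -> xle x y -> xle (xadd q x) (xadd r y).
Proof. case: x; case: y => //= p p' hqr hp; lra. Qed.

Lemma xadd_fin q p x : xle (XFin p) x -> xle (XFin (q + p)) (xadd q x).
Proof. case: x => //= p' hp; lra. Qed.

Lemma xadd_fin_inv q p x : xle (XFin p) (xadd q x) -> xle (XFin (p - q)) x.
Proof. case: x => //= p' hp; lra. Qed.

Lemma xadd_add q r x : xadd q (xadd r x) = xadd (q + r) x.
Proof. by case: x => //= p; rewrite addrA. Qed.

Lemma xle_fin_all m z :
  (forall q, xle (XFin q) m -> xle (XFin q) z) -> xle m z.
Proof.
case: m => [p|] h; first by apply: h; exact: le_refl.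
case: z h => // p h; have := h (p + 1) isT => /=; lra.
Qed.

Lemma foldr_xmin_le (f : nat -> xr) (s : seq nat) t :
  t \in s -> xle (foldr xmin XInf (map f s)) (f t).
Proof.
elim: s => //= x s IH; rewrite in_cons => /orP [/eqP ->|h].
  exact: xmin_l.
apply: xle_minr; exact: IH.
Qed.

Lemma foldr_xmin_ge (f : nat -> xr) (s : seq nat) z :
  (forall t, t \in s -> xle z (f t)) -> xle z (foldr xmin XInf (map f s)).
Proof.
elim: s => [|x s IH] h /=; first exact: xle_inf.
apply: xle_min; first by apply: h; rewrite mem_head.
apply: IH => t ht; apply: h; by rewrite in_cons ht orbT.
Qed.

Lemma xadd0 x : xadd 0 x = x.
Proof. by case: x => //= p; rewrite add0r. Qed.

Lemma xfin_le p q x : p <= q -> xle (XFin q) x -> xle (XFin p) x.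
Proof. move=> h; apply: xle_trans; exact: h. Qed.

Lemma int_max (T : Type) (f : T -> int) (K : int) (t0 : T) :
  (forall t, f t <= K) -> exists t1, forall t, f t <= f t1.
Proof.
move=> hK.
suff H : forall n : nat, (exists t, K - n%:Z <= f t) -> exists t1, forall t, f t <= f t1.
  apply: (H (absz (K - f t0))); exists t0.
  have := hK t0; lia.
elim=> [|n IH] [t ht].
  by exists t => t'; have := hK t'; have := hK t; lia.
case: (classic (exists t, K - n%:Z <= f t)) => [h|h]; first exact: IH.
exists t => t'; case: (lerP (K - n%:Z) (f t')) => h2.
  by exfalso; apply: h; exists t'.
lia.
Qed.

Section Val.
Variables (F : fieldType) (K : dyadic_local_field F).
Local Notation ord := (ord K).
Local Notation ordr := (ordr K).
Local Notation ordx := (ordx K).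
Local Notation qdef := (qdef K).

Lemma ord1 : ord 1 = 0.
Proof.
have H : forall z : int, z = z + z -> z = 0 by move=> z; lia.
apply: H; have := ord_mul K (oner_neq0 F) (oner_neq0 F); by rewrite mulr1.
Qed.

Lemma ordN1 : ord (-1) = 0.
Proof.
have h1 : (-1 : F) != 0 by rewrite oppr_eq0 oner_neq0.
have H : forall z : int, 0 = z + z -> z = 0 by move=> z; lia.
apply: H; have := ord_mul K h1 h1; by rewrite mulrNN mulr1 ord1.
Qed.

Lemma ordN z : z != 0 -> ord (- z) = ord z.
Proof.
move=> hz; have h1 : (-1 : F) != 0 by rewrite oppr_eq0 oner_neq0.
by rewrite -mulN1r ord_mul // ordN1 add0r.
Qed.

Lemma ordrM x y : x != 0 -> y != 0 -> ordr (x * y) = ordr x + ordr y.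
Proof. by move=> hx hy; rewrite /Defs.ordr ord_mul // intrD. Qed.

Lemma ordrN z : z != 0 -> ordr (- z) = ordr z.
Proof. by move=> hz; rewrite /Defs.ordr ordN. Qed.

Lemma ordr1 : ordr 1 = 0.
Proof. by rewrite /Defs.ordr ord1. Qed.

Definition vge (z : F) (r : rat) : bool := (z == 0) || (r <= ordr z).

Lemma vge0 r : vge 0 r.
Proof. by rewrite /vge eqxx. Qed.

Lemma vge_le z r r' : vge z r -> r' <= r -> vge z r'.
Proof. rewrite /vge => /orP [->//|h] h'; rewrite (le_trans h' h) orbT //. Qed.

Lemma vge_add z w r : vge z r -> vge w r -> vge (z + w) r.
Proof.
rewrite /vge; case: (eqVneq z 0) => [->|hz]; first by rewrite add0r.
case: (eqVneq w 0) => [->|hw]; first by rewrite addr0 /= => ->; rewrite orbT.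
case: (eqVneq (z + w) 0) => //= hzw h1 h2.
have := ord_add K hz hw hzw.
move: h1 h2; rewrite /Defs.ordr => h1 h2 hm.
have [h|h] : ord z <= ord (z + w) \/ ord w <= ord (z + w) by lia.
  by apply: le_trans h1 _; rewrite ler_int.
by apply: le_trans h2 _; rewrite ler_int.
Qed.

Lemma vge_opp z r : vge z r -> vge (- z) r.
Proof.
rewrite /vge; case: (eqVneq z 0) => [->|hz]; first by rewrite oppr0 eqxx.
by rewrite oppr_eq0 (negbTE hz) /= ordrN.
Qed.

Lemma vge_sub z w r : vge z r -> vge w r -> vge (z - w) r.
Proof. by move=> h1 h2; apply: vge_add => //; exact: vge_opp. Qed.

Lemma vge_mul z w r : vge z r -> w != 0 -> vge (z * w) (r + ordr w).
Proof.
rewrite /vge; case: (eqVneq z 0) => [->|hz]; first by rewrite mul0r eqxx.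
move=> /= h hw; rewrite mulf_eq0 (negbTE hz) (negbTE hw) /= ordrM //; lra.
Qed.

Lemma vge_mul2 z w r s : vge z r -> vge w s -> vge (z * w) (r + s).
Proof.
case: (eqVneq w 0) => [->|hw]; first by rewrite mulr0 => _ _; exact: vge0.
move=> h1; rewrite {1}/vge (negbTE hw) /= => h2.
apply: (vge_le (vge_mul h1 hw)); lra.
Qed.

Lemma vge_self z : vge z (ordr z).
Proof. by rewrite /vge lexx orbT. Qed.

Lemma vge_ne0 z r : z != 0 -> vge z r -> r <= ordr z.
Proof. by rewrite /vge => /negbTE ->. Qed.

Lemma intg_vge x : intg K x = vge x 0.
Proof. by rewrite /intg /vge /Defs.ordr ler0z. Qed.

Lemma ordx_vge z r : xle (XFin r) (ordx z) = vge z r.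
Proof. by rewrite /Defs.ordx /vge; case: (z == 0). Qed.

Definition Sq (c : F) := fun u => exists x : F, u = ordx (c - x ^+ 2).

Definition islub (S : xr -> Prop) u :=
  (forall x, S x -> xle x u) /\ (forall v, (forall x, S x -> xle x v) -> xle u v).

Lemma lub_ex c : exists u, islub (Sq c) u.
Proof.
case: (classic (exists x, c - x ^+ 2 = 0)) => [[x0 hx0]|hno].
  exists XInf; split=> [x _|v hv]; first exact: xle_inf.
  by have := hv _ (ex_intro _ x0 erefl); rewrite /Defs.ordx hx0 eqxx.
have hfin x : ordx (c - x ^+ 2) = XFin (ordr (c - x ^+ 2)).
  rewrite /Defs.ordx; case: eqP => // h; by exfalso; apply: hno; exists x.
case: (classic (exists q, forall x, ordr (c - x ^+ 2) <= q)) => [[q hq]|hub].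
  have [x1 hx1] := @int_max F (fun x => ord (c - x ^+ 2)) (Num.ceil q) 0
    (fun x => ltac:(rewrite -(ler_int rat); exact: le_trans (hq x) (ceil_ge q))).
  exists (ordx (c - x1 ^+ 2)); split=> [u [x ->]|v hv].
    by rewrite !hfin /= /Defs.ordr ler_int.
  by apply: hv; exists x1.
exists XInf; split=> [x _|v hv]; first exact: xle_inf.
case: v hv => // q hv; exfalso; apply: hub; exists q => x.
by have := hv _ (ex_intro _ x erefl); rewrite hfin.
Qed.

Lemma xsup_lub c : islub (Sq c) (xsup (Sq c)).
Proof. exact: (epsilon_spec (inhabits XInf) (islub (Sq c)) (lub_ex c)). Qed.

Lemma qdef_lb c x : xle (xadd (- ordr c) (ordx (c - x ^+ 2))) (qdef c).
Proof.
rewrite /Defs.qdef; apply: xadd_le; first exact: lexx.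
have [h _] := xsup_lub c; apply: h; by exists x.
Qed.

Lemma qdef_approx c q : xle (XFin q) (qdef c) ->
  exists x, xle (XFin q) (xadd (- ordr c) (ordx (c - x ^+ 2))).
Proof.
move=> hq; apply: NNPP => hno.
have hlt x : exists z : int, ordx (c - x ^+ 2) = XFin z%:~R /\ z%:~R < q + ordr c.
  have hx : ~ xle (XFin q) (xadd (- ordr c) (ordx (c - x ^+ 2))) by move=> h; apply: hno; exists x.
  move: hx; rewrite /Defs.ordx; case: eqP => //= _ /negP; rewrite -ltNge => hx.
  exists (ord (c - x ^+ 2)); split=> //; rewrite /Defs.ordr in hx *; lra.
have [_ hl] := xsup_lub c.
have hb : xle (xsup (Sq c)) (XFin (Num.ceil (q + ordr c) - 1)%:~R).
  apply: hl => u [x ->]; have [z [-> hz]] := hlt x => /=.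
  by rewrite ler_int -ltzD1 subrK ceil_gt_int.
have := ceilB1_lt (q + ordr c).
move: hq; rewrite /Defs.qdef; case: (xsup (Sq c)) hb => //= p hb hq; lra.
Qed.

Lemma qdef_ge0 c : c != 0 -> xle (XFin 0) (qdef c).
Proof.
move=> hc; apply: xle_trans (qdef_lb c 0).
by rewrite expr0n /= subr0 /Defs.ordx (negbTE hc) /= addNr lexx.
Qed.

Lemma qdef_ge c q x : vge (c - x ^+ 2) (q + ordr c) -> xle (XFin q) (qdef c).
Proof.
move=> h; apply: xle_trans (qdef_lb c x).
have : xle (XFin (q + ordr c)) (ordx (c - x ^+ 2)) by rewrite ordx_vge.
move=> /(xadd_fin (- ordr c)); congr xle; congr XFin; lra.
Qed.

Lemma qdef_ge_inv c q : xle (XFin q) (qdef c) ->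
  exists x, vge (c - x ^+ 2) (q + ordr c).
Proof.
move=> /qdef_approx [x hx]; exists x; rewrite -ordx_vge.
have := xadd_fin_inv hx; congr xle; congr XFin; lra.
Qed.

Lemma qdef_mul x y : x != 0 -> y != 0 ->
  xle (xmin (qdef x) (qdef y)) (qdef (x * y)).
Proof.
move=> hx hy; apply: xle_fin_all => q hq.
have hxy : x * y != 0 by rewrite mulf_neq0.
case: (lerP q 0) => hq0.
  by apply: xle_trans (qdef_ge0 hxy); rewrite /= hq0.
have [s hs] := qdef_ge_inv (xle_trans hq (xmin_l _ _)).
have [t ht] := qdef_ge_inv (xle_trans hq (xmin_r _ _)).
apply: (qdef_ge (x := s * t)).
have hs2 : vge (s ^+ 2) (ordr x).
  have -> : s ^+ 2 = x - (x - s ^+ 2) by ring.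
  apply: vge_sub; first exact: vge_self.
  apply: vge_le hs _; lra.
have -> : x * y - (s * t) ^+ 2 = (x - s ^+ 2) * y + s ^+ 2 * (y - t ^+ 2) by ring.
rewrite ordrM //; apply: vge_add.
  apply: vge_le (vge_mul hs hy) _; lra.
apply: vge_le (vge_mul2 hs2 ht) _; lra.
Qed.

End Val.

Section Lat.
Variables (F : fieldType) (K : dyadic_local_field F).
Variables (k : nat) (G : 'M[F]_k).
Local Notation ord := (ord K).
Local Notation ordr := (ordr K).
Local Notation Bf := (Bf G).
Local Notation Qf := (Qf G).
Local Notation proj := (proj G).
Local Notation in_lat := (in_lat K).

Lemma Bf_addl u w v : Bf (u + w) v = Bf u v + Bf w v.
Proof. by rewrite /Defs.Bf !mulmxDl mxE. Qed.

Lemma Bf_scalel a u v : Bf (a *: u) v = a * Bf u v.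
Proof. by rewrite /Defs.Bf -!scalemxAl mxE. Qed.

Hypothesis Gsym : G^T = G.

Lemma Bf_sym u v : Bf u v = Bf v u.
Proof.
have h (A : 'M[F]_1) : A 0 0 = A^T 0 0 by rewrite mxE.
by rewrite /Defs.Bf [RHS]h !trmx_mul trmxK Gsym mulmxA.
Qed.

Lemma Bf_addr u w v : Bf v (u + w) = Bf v u + Bf v w.
Proof. by rewrite Bf_sym Bf_addl !(Bf_sym v). Qed.

Lemma Bf_scaler a u v : Bf v (a *: u) = a * Bf v u.
Proof. by rewrite Bf_sym Bf_scalel (Bf_sym v). Qed.

Lemma Bf_oppl u v : Bf (- u) v = - Bf u v.
Proof. by rewrite -scaleN1r Bf_scalel mulN1r. Qed.

Lemma Bf_oppr u v : Bf v (- u) = - Bf v u.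
Proof. by rewrite -scaleN1r Bf_scaler mulN1r. Qed.

Lemma Qf_proj x v : Qf x != 0 ->
  Qf (proj x v) = Qf v - Bf v x ^+ 2 / Qf x.
Proof.
move=> hx; rewrite /Defs.proj /Defs.Qf.
rewrite Bf_addl Bf_oppl !Bf_addr !Bf_oppr !Bf_scalel !Bf_scaler (Bf_sym x v).
rewrite /Defs.Qf in hx; field; exact: hx.
Qed.

Lemma Qf_add v x : Qf (v + x) = Qf v + 2%:R * Bf v x + Qf x.
Proof.
rewrite /Defs.Qf Bf_addl !Bf_addr (Bf_sym x v); ring.
Qed.

Lemma proj_add x u w : proj x (u + w) = proj x u + proj x w.
Proof.
rewrite /Defs.proj Bf_addl mulrDl scalerDl; set a := _ *: x; set b := _ *: x.
rewrite opprD !addrA; congr (_ + _); rewrite -!addrA; congr (_ + _); exact: addrC.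
Qed.

Lemma proj_scale x c u : proj x (c *: u) = c *: proj x u.
Proof. by rewrite /Defs.proj Bf_scalel scalerBr scalerA mulrA. Qed.

Lemma proj0 x : proj x 0 = 0.
Proof. by rewrite -(scale0r 0) proj_scale !scale0r. Qed.

Lemma proj_sum x n (c : 'I_n -> F) (s : seq 'rV[F]_k) :
  proj x (\sum_(i < n) c i *: s`_i) = \sum_(i < n) c i *: proj x s`_i.
Proof.
rewrite (big_morph (proj x) (proj_add x) (proj0 x)).
apply: eq_bigr => i _; exact: proj_scale.
Qed.

Lemma intg1 : intg K 1.
Proof. by rewrite intg_vge; apply: vge_le (vge_self K 1) _; rewrite ordr1. Qed.

Lemma in_lat_add (s : seq 'rV[F]_k) v w : in_lat s v -> in_lat s w -> in_lat s (v + w).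
Proof.
move=> [c [hc ->]] [d [hd ->]]; exists (fun i => c i + d i); split.
  by move=> i; rewrite intg_vge; apply: vge_add; rewrite -intg_vge.
by rewrite -big_split /=; apply: eq_bigr => i _; rewrite scalerDl.
Qed.

Lemma sum_cast m n (e : m = n) (f : 'I_n -> 'rV[F]_k) :
  \sum_(i < m) f (cast_ord e i) = \sum_(i < n) f i.
Proof. by case: n / e f => f; apply: eq_bigr => i _; rewrite cast_ord_id. Qed.

Lemma in_lat_map x s y : in_lat (map (proj x) s) y ->
  exists v, in_lat s v /\ y = proj x v.
Proof.
move=> [c [hc ->]].
exists (\sum_(i < size (map (proj x) s)) c i *: s`_i); split.
  exists (fun i => c (cast_ord (esym (size_map (proj x) s)) i)); split=> //.
  rewrite -(sum_cast (esym (size_map (proj x) s))); apply: eq_bigr => i _ //.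
rewrite proj_sum; apply: eq_bigr => i _; rewrite (nth_map 0) //.
have := ltn_ord i; move: (nat_of_ord i) => i'; by rewrite size_map.
Qed.

End Lat.

Section Bong.
Variables (F : fieldType) (K : dyadic_local_field F).
Local Notation ord := (ord K).
Local Notation ordr := (ordr K).
Local Notation eF := (eF K).
Local Notation qdef := (qdef K).

Definition PP (p q : F) :=
  ordr p - 2%:R * eF <= ordr q /\
  (ordr q = ordr p - 2%:R * eF -> xle (XFin (2%:R * eF)) (qdef (- (p * q)))).

Lemma vge2 : vge K 2%:R 0.
Proof. by rewrite /vge /Defs.ordr ler0z ltW ?ord_two_gt0 ?orbT. Qed.

Variables (k : nat) (G : 'M[F]_k).
Hypothesis Gsym : G^T = G.
Local Notation Bf := (Bf G).
Local Notation Qf := (Qf G).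
Local Notation proj := (proj G).
Local Notation in_lat := (in_lat K).

Lemma bong_pair (s : seq 'rV[F]_k) x y :
  in_lat s x -> Qf x != 0 -> (forall v, in_lat s v -> intg K (Qf v / Qf x)) ->
  in_lat (map (proj x) s) y -> Qf y != 0 -> PP (Qf x) (Qf y).
Proof.
move=> hx hQx hn hy hQy; have [v [hv hyv]] := in_lat_map hy; subst y.
have hu : vge K (Qf v / Qf x) 0 by rewrite -intg_vge; exact: hn.
have hvx : vge K (Qf (v + x) / Qf x) 0 by rewrite -intg_vge; apply: hn; exact: in_lat_add.
have h1 : vge K 1 0 by rewrite -intg_vge; exact: intg1.
have hw : vge K (2%:R * Bf v x / Qf x) 0.
  have -> : 2%:R * Bf v x / Qf x = Qf (v + x) / Qf x - Qf v / Qf x - 1.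
    by rewrite Qf_add //; field.
  by apply: vge_sub => //; apply: vge_sub.
have hQy' := Qf_proj Gsym v hQx.
have e2 : (2%:R : F) != 0 := two_neq0 K.
set u := Qf v / Qf x in hu; set w := 2%:R * Bf v x / Qf x in hw.
have key : Qf (proj x v) * (2%:R * 2%:R) =
    Qf x * (2%:R * 2%:R * u - w ^+ 2).
  by rewrite hQy' /u /w; field.
set z := (2%:R * 2%:R * u - w ^+ 2) in key.
have hz : vge K z 0.
  apply: vge_sub; first by have := vge_mul2 (vge_mul2 vge2 vge2) hu; rewrite !addr0.
  by rewrite expr2; have := vge_mul2 hw hw; rewrite addr0.
have hz0 : z != 0.
  apply/eqP => hz0; move: key; rewrite hz0 mulr0 => /eqP; rewrite mulf_eq0 (negbTE hQy) /=.
  by rewrite mulf_eq0 (negbTE e2).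
have hord : ordr (Qf (proj x v)) + (eF + eF) = ordr (Qf x) + ordr z.
  by rewrite -ordrM // -key ordrM // ?mulf_neq0 // ordrM.
have hz' := vge_ne0 hz0 hz.
split; first lra.
move=> heq.
apply: (@qdef_ge _ K _ _ (Bf v x)).
have -> : - (Qf x * Qf (proj x v)) - Bf v x ^+ 2 = - (Qf x * Qf v).
  by rewrite hQy'; field.
rewrite ordrN ?oppr_eq0 ?mulf_neq0 // ordrM //.
apply: vge_opp.
have hQv : vge K (Qf v) (ordr (Qf x)).
  have -> : Qf v = u * Qf x by rewrite /u divfK.
  by have := vge_mul hu hQx; rewrite add0r.
apply: vge_le (vge_mul2 (vge_self K (Qf x)) hQv) _; lra.
Qed.

Lemma bong_seq (s : seq 'rV[F]_k) xs : is_BONG K G s xs ->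
  (forall i, (i < size xs)%N -> Qf (nth 0 xs i) != 0) /\
  (forall i, (i.+1 < size xs)%N -> PP (Qf (nth 0 xs i)) (Qf (nth 0 xs i.+1))).
Proof.
elim: xs s => [|x xs IH] s /=; first by split.
move=> [hx hQx hn hB]; have [IH1 IH2] := IH _ hB; split.
  by case=> [|i] //= hi; apply: IH1.
case=> [|i] /= hi; last by apply: IH2.
move: hB hi; case: xs {IH IH1 IH2} => [|y xs'] //= [hy hQy _ _] _.
exact: (bong_pair hx hQx hn hy hQy).
Qed.

End Bong.

Section Seqs.
Variables (F : fieldType) (K : dyadic_local_field F).
Local Notation ordr := (ordr K).
Local Notation Rr := (Rr K).

Lemma good_chain (a : seq F) : good_seq K a -> forall t i, (1 <= i)%N ->
  (i + t.*2 <= size a)%N -> Rr a i <= Rr a (i + t.*2)%N.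
Proof.
move=> hg; elim=> [|t IH] i h1 h2; first by rewrite addn0.
have h3 : (i + t.*2 <= size a)%N by move: h2; rewrite doubleS; lia.
apply: le_trans (IH _ h1 h3) _.
rewrite doubleS !addnS /Defs.Rr /Defs.ordr ler_int; apply: hg; lia.
Qed.

Lemma good_chain2 (a : seq F) i i' : good_seq K a -> (1 <= i)%N -> (i <= i')%N ->
  (i' <= size a)%N -> ~~ odd (i' - i) -> Rr a i <= Rr a i'.
Proof.
move=> hg h1 h2 h3 hodd.
have := odd_double_half (i' - i); rewrite (negbTE hodd) add0n => e.
have -> : i' = (i + (i' - i)./2.*2)%N by rewrite e subnKC.
apply: good_chain => //; rewrite e subnKC //.
Qed.

Lemma bong_facts (k : nat) (G : 'M[F]_k) (s : seq 'rV[F]_k) (a : seq F) :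
  G^T = G -> good_BONG_lattice K G s a ->
  (forall i, (0 < i <= size a)%N -> ai a i != 0) /\
  (forall i, (0 < i)%N -> (i < size a)%N -> PP K (ai a i) (ai a i.+1)).
Proof.
move=> Gsym [xs [hB [ha hg]]]; subst a.
have [h1 h2] := bong_seq Gsym hB; split.
  case=> [|i] // /andP [_ hi]; rewrite size_map in hi.
  rewrite /ai (nth_map 0) ?size_map //=; exact: h1.
case=> [|i] // _ hi; rewrite size_map in hi.
rewrite /ai /= (nth_map 0) ?(nth_map 0) //; first exact: h2.
exact: ltnW.
Qed.

Lemma R1_ge0 (k : nat) (G : 'M[F]_k) (s : seq 'rV[F]_k) (a : seq F) :
  good_BONG_lattice K G s a -> integral_lattice K G s -> (0 < size a)%N ->
  0 <= Rr a 1.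
Proof.
move=> [xs [hB [ha hg]]] hI; subst a.
move: hB hg; case: xs => [|x xs] //= [hx hQx _ _] _ _.
have := hI _ hx; rewrite intg_vge /Defs.Rr /ai /= => h.
exact: vge_ne0 hQx h.
Qed.

Lemma prodr_S (a : seq F) n : prodr a 1 n.+1 = prodr a 1 n * ai a n.+1.
Proof. by rewrite /prodr big_nat_recr. Qed.

Lemma prodr_0 (a : seq F) : prodr a 1 0 = 1.
Proof. by rewrite /prodr big_geq. Qed.

Lemma prodr_neq0 (a : seq F) n : (forall i, (0 < i <= n)%N -> ai a i != 0) ->
  prodr a 1 n != 0.
Proof.
elim: n => [|n IH] h; first by rewrite prodr_0 oner_neq0.
rewrite prodr_S mulf_neq0 //; first by apply: IH => i hi; apply: h; lia.
by apply: h; lia.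
Qed.

Lemma qdef1 r : xle r (qdef K 1).
Proof.
apply: xle_trans (qdef_lb K 1 1) .
by rewrite expr1n subrr /Defs.ordx eqxx /=; exact: xle_inf.
Qed.

End Seqs.

Theorem lemma2p9 (F : fieldType) (K : dyadic_local_field F)
    (k1 k2 : nat) (G1 : 'M[F]_k1) (G2 : 'M[F]_k2)
    (sM : seq 'rV[F]_k1) (sN : seq 'rV[F]_k2) (a b : seq F) (j : nat) :
  G1^T = G1 -> G2^T = G2 ->
  good_BONG_lattice K G1 sM a -> good_BONG_lattice K G2 sN b ->
  integral_lattice K G1 sM -> integral_lattice K G2 sN ->
  (size b <= size a)%N ->
  (1 <= j <= minn (size a).-1 (size b))%N -> ~~ odd j ->
  Rr K a j = - (2%:R * eF K) -> Rr K a j.+1 = 0 ->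
  xle (Acoef K a b j) (dbr K a b 1 j j).
Proof.
move=> G1s G2s hM hN iM iN hnm /andP [hj1 hjm] hjodd hRj hRj1.
have hja : (j < size a)%N by lia.
have hjb : (j <= size b)%N by lia.
have hj2 : (2 <= j)%N by case: j hj1 hjodd {hjm hRj hRj1 hja hjb} => [|[|j]].
have [anz aPP] := bong_facts G1s hM.
have [bnz bPP] := bong_facts G2s hN.
have hR1 := R1_ge0 hM iM (ltn_trans hj1 hja).
have hS1 := R1_ge0 hN iN (leq_trans hj1 hjb).
have [_ [_ [_ ga]]] := hM.
have [_ [_ [_ gb]]] := hN.
have hE : 0 < eF K by rewrite /eF /Defs.ordr ltr0z ord_two_gt0.
have FAodd jj : odd jj -> (jj <= j.+1)%N -> Rr K a jj = 0.
  move=> ho hle.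
  have h1 : (1 <= jj)%N by case: jj ho {hle}.
  have := @good_chain2 _ K a 1 jj ga (leqnn 1) h1 (leq_trans hle hja).
  rewrite oddB // ho /= => /(_ isT) h2.
  have := @good_chain2 _ K a jj j.+1 ga h1 hle hja.
  rewrite oddB // ho /= hjodd /= => /(_ isT) h3.
  lra.
have FAeven jj : ~~ odd jj -> (2 <= jj <= j)%N -> Rr K a jj <= - (2%:R * eF K).
  move=> ho /andP [h2 hle]; rewrite -hRj.
  apply: good_chain2 => //; first by lia.
    by lia.
  by rewrite oddB // (negbTE ho) (negbTE hjodd).
have FApair jj : odd jj -> (jj < j)%N ->
    xle (XFin (2%:R * eF K)) (qdef K (- (ai a jj * ai a jj.+1))).
  move=> ho hlt.
  have h1 : (0 < jj)%N by case: jj ho {hlt}.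
  have [hp1 hp2] := aPP jj h1 (ltn_trans hlt hja).
  apply: hp2.
  have e0 := FAodd jj ho (leq_trans (ltnW hlt) (leqnSn j)).
  have e1 : Rr K a jj.+1 <= - (2%:R * eF K).
    by apply: FAeven; [rewrite /= ho | apply/andP; split; lia].
  rewrite /Rr in e0 e1; lra.
have FBodd ll : odd ll -> (ll <= size b)%N -> 0 <= Rr K b ll.
  move=> ho hle.
  have h1 : (1 <= ll)%N by case: ll ho {hle}.
  have := @good_chain2 _ K b 1 ll gb (leqnn 1) h1 hle.
  rewrite oddB // ho /= => /(_ isT) h2; lra.
have FBj : - (2%:R * eF K) <= Rr K b j.
  have [hp1 _] := bPP 1%N isT (leq_trans hj2 hjb).
  have := @good_chain2 _ K b 2 j gb isT hj2 hjb.
  rewrite oddB // (negbTE hjodd) /= => /(_ isT) h2.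
  rewrite /Rr in h2 hS1 *; lra.
have H1 : xle (Acoef K a b j) (XFin ((Rr K a j.+1 - Rr K b j) / 2%:R + eF K)).
  exact: xmin_l.
have H2 : xle (Acoef K a b j) (xadd (- Rr K b j) (alpha K b j.-1)).
  rewrite /Acoef; apply: xle_trans (xle_trans (xmin_r _ _) (xmin_l _ _)) _.
  apply: xadd_le; first by rewrite hRj1 add0r.
  rewrite /dbr; apply: xle_minr; apply: xle_minr.
  rewrite (_ : (0 < j.-1 < size b)%N = true); last by lia.
  exact: xle_refl.
have H2a : (j.+1 < size a)%N -> xle (Acoef K a b j) (xadd (- Rr K b j) (alpha K a j.+1)).
  move=> hh.
  rewrite /Acoef; apply: xle_trans (xle_trans (xmin_r _ _) (xmin_l _ _)) _.
  apply: xadd_le; first by rewrite hRj1 add0r.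
  rewrite /dbr; apply: xle_minr; apply: xle_minl.
  rewrite (_ : (0 < j.+1 < size a)%N = true); last by lia.
  exact: xle_refl.
rewrite /dbr; apply: xle_min; last apply: xle_min.
-
  rewrite mul1r.
  suff HD : forall t, (t.*2 <= j)%N ->
      xle (Acoef K a b j) (qdef K (prodr a 1 t.*2 * prodr b 1 t.*2)).
    have := HD j./2; rewrite halfK (negbTE hjodd) subn0; apply; exact: leqnn.
  elim=> [|t IH] ht; first by rewrite !prodr_0 mulr1; exact: qdef1.
  have htt : (t.*2.+2 <= j)%N by rewrite -doubleS.
  have ht' : (t.*2 <= j)%N by clear -htt; lia.
  have hA1 : (0 < t.*2.+1 <= size a)%N by clear -htt hja; lia.
  have hA2 : (0 < t.*2.+2 <= size a)%N by clear -htt hja; lia.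
  have hB1 : (0 < t.*2.+1 <= size b)%N by clear -htt hjb; lia.
  have hB2 : (0 < t.*2.+2 <= size b)%N by clear -htt hjb; lia.
  have hlt : (t.*2.+1 < j)%N by clear -htt; lia.
  have hlt' : (t.*2.+1 <= j.-1)%N by clear -htt; lia.
  have hlb : (t.*2.+1 < size b)%N by clear -htt hjb; lia.
  rewrite doubleS !prodr_S.
  have hP : prodr a 1 t.*2 * prodr b 1 t.*2 != 0.
    rewrite mulf_neq0 //; apply: prodr_neq0 => i hi; [apply: anz | apply: bnz];
      clear -hi ht' hja hjb; lia.
  have hX : - (ai a t.*2.+1 * ai a t.*2.+2) != 0 by rewrite oppr_eq0 mulf_neq0 // anz.
  have hY : - (ai b t.*2.+1 * ai b t.*2.+2) != 0 by rewrite oppr_eq0 mulf_neq0 // bnz.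
  have -> : prodr a 1 t.*2 * ai a t.*2.+1 * ai a t.*2.+2 *
            (prodr b 1 t.*2 * ai b t.*2.+1 * ai b t.*2.+2) =
     (prodr a 1 t.*2 * prodr b 1 t.*2) *
     ((- (ai a t.*2.+1 * ai a t.*2.+2)) * (- (ai b t.*2.+1 * ai b t.*2.+2))) by ring.
  apply: (xle_trans _ (qdef_mul K hP (mulf_neq0 hX hY))); apply: xle_min; first exact: IH.
  apply: (xle_trans _ (qdef_mul K hX hY)); apply: xle_min.
    apply: xle_trans H1 _; apply: xfin_le (FApair _ _ hlt); last by rewrite /= odd_double.
    rewrite hRj1; clear -FBj; lra.
  apply: xle_trans H2 _.
  have hll : (t.*2.+1 \in iota 0 (size b)) by rewrite mem_iota add0n.
  apply: xle_trans (xadd_le (lexx _) (foldr_xmin_le (Tterm K b j.-1) hll)) _.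
  rewrite /Tterm /= (_ : (t.*2 < j.-1)%N = true) //.
  rewrite prednK // xadd_add -[X in xle _ X]xadd0; apply: xadd_le; last exact: xle_refl.
  have : 0 <= Rr K b t.*2.+1.
    by apply: FBodd; [rewrite /= odd_double | exact: ltnW].
  clear; lra.
-
  rewrite (_ : (0 < j < size a)%N = true); last by clear -hj1 hja; lia.
  rewrite /alpha; apply: foldr_xmin_ge => jj; rewrite mem_iota add0n => /andP [_ hjj].
  case: (posnP jj) => [->|hjj0].
    apply: xle_trans H1 _; rewrite /Tterm /=; rewrite hRj1 hRj; clear -FBj; lra.
  rewrite /Tterm; move: (hjj0); rewrite lt0n => /negbTE ->.
  case: (leqP jj j) => hjj2.
    apply: xle_trans H1 _.
    have hne : - (ai a jj * ai a jj.+1) != 0.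
      by rewrite oppr_eq0 mulf_neq0 //; apply: anz; clear -hjj0 hjj2 hja; lia.
    case: (boolP (odd jj)) => ho.
      have hlt : (jj < j)%N by rewrite ltn_neqAle hjj2 andbT; apply/eqP => e; rewrite -e ho in hjodd.
      have := xadd_fin (Rr K a j.+1 - Rr K a jj) (FApair jj ho hlt).
      have hz : Rr K a jj = 0 by apply: FAodd => //; clear -hjj2; lia.
      apply: xfin_le; rewrite hz hRj1; clear -FBj; lra.
    have := xadd_fin (Rr K a j.+1 - Rr K a jj) (qdef_ge0 K hne).
    have h2jj : (1 < jj)%N by move: ho hjj0; clear; case: jj => [|[|jj]].
    have h2j : (1 < jj <= j)%N by rewrite h2jj hjj2.
    apply: xfin_le; have := FAeven jj ho h2j.
    rewrite hRj1; clear -FBj; lra.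
  have hh : (j.+1 < size a)%N by clear -hjj hjj2; lia.
  apply: xle_trans (H2a hh) _.
  have hll : (jj \in iota 0 (size a)) by rewrite mem_iota add0n.
  apply: xle_trans (xadd_le (lexx _) (foldr_xmin_le (Tterm K a j.+1) hll)) _.
  rewrite /Tterm; move: (hjj0); rewrite lt0n => /negbTE ->.
  case: (leqP jj j.+1) => h3.
    have e : jj = j.+1 by clear -hjj2 h3; lia.
    subst jj; rewrite xadd_add; apply: xadd_le; last exact: xle_refl.
    rewrite hRj1 hRj; clear -FBj; lra.
  rewrite xadd_add; apply: xadd_le; last exact: xle_refl.
  rewrite hRj1 hRj; clear -FBj; lra.
-
  case: ifP => hjb'; last exact: xle_inf.
  rewrite /alpha; apply: foldr_xmin_ge => ll; rewrite mem_iota add0n => /andP [_ hll].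
  have hSj1 : 0 <= Rr K b j.+1 by apply: FBodd; [rewrite /= hjodd | clear -hjb'; lia].
  have hSjm : 0 <= Rr K b j.-1.
    by apply: FBodd; [rewrite -subn1 oddB ?(negbTE hjodd) // | clear -hjb; lia].
  case: (posnP ll) => [->|hll0].
    apply: xle_trans H1 _; rewrite /Tterm /=; rewrite hRj1; clear -hSj1; lra.
  apply: xle_trans H2 _.
  have hll' : (ll \in iota 0 (size b)) by rewrite mem_iota add0n.
  apply: xle_trans (xadd_le (lexx _) (foldr_xmin_le (Tterm K b j.-1) hll')) _.
  rewrite /Tterm; move: (hll0); rewrite lt0n => /negbTE ->.
  case: (leqP ll j.-1) => h3.
    rewrite (_ : (ll <= j)%N = true); last by clear -h3; lia.
    rewrite prednK // xadd_add; apply: xadd_le; last exact: xle_refl.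
    clear -hSj1; lra.
  case: (leqP ll j) => h4.
    have e : ll = j by clear -h3 h4; lia.
    subst ll; rewrite xadd_add; apply: xadd_le; last exact: xle_refl.
    clear -hSjm; lra.
  rewrite xadd_add; apply: xadd_le; last exact: xle_refl.
  clear -hSjm; lra.
Qed.
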